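(* Let $a\in\mathbb{R}$ and $k\ge0$. Then $$(z-a)^3q_{2k+1}^{(\mathrm{pre})}(z)=(z-a)^2z^{2k+2}+a\frac{(2k+1)!!}{2^{k+2}f_k(a^2)}\mathcal L_{k+1}(z,a),$$ $$(z-a)^3q_{2k}^{(\mathrm{pre})}(z)=a(z-a)^2\frac{e_{k+1}(a^2)}{f_k(a^2)}z^{2k+2}+\frac{(2k+3)!!}{2^{k+3}f_k(a^2)}\mathcal L_{k+2}(z,a)-a^2\frac{(2k+1)!!}{2^{k+2}f_k(a^2)}\mathcal L_{k+1}(z,a),$$ where $$\mathcal L_m(z,a)=(2(z-a)^2-1)\varkappa_m^{(\mathrm g)}(z,a)+2(z-a)e_{2m-1}(2za)-(z-a)\frac{2^{m+1}z^{2m}}{(2m-1)!!}e_{m-1}(a^2).$$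
   Context: $e_k(x)=\sum_{j=0}^kx^j/j!$, $f_k(x)=(k+1)e_k(x)-xe_{k-1}(x)$ (with $e_{-1}\equiv0$). $\varkappa_m^{(\mathrm g)}(z,w)=\sqrt2\sum_{n=0}^{m-1}\sum_{\ell=0}^{n}\Big(\frac{(\sqrt2z)^{2n+1}}{(2n+1)!!}\frac{(\sqrt2w)^{2\ell}}{(2\ell)!!}-\frac{(\sqrt2w)^{2n+1}}{(2n+1)!!}\frac{(\sqrt2z)^{2\ell}}{(2\ell)!!}\Big)$. The polynomials are $q_{2k}^{(\mathrm{pre})}(z)=\sum_{j=0}^{2k}\alpha_{2k,j}z^j$, $q_{2k+1}^{(\mathrm{pre})}(z)=\sum_{j=0}^{2k+1}\beta_{2k+1,j}z^j$ with, writing $c_{j,k}=\frac{2^jf_j(a^2)}{2^kf_k(a^2)}$: $\alpha_{2k,2j}=c_{j,k}\big[\sum_{\ell=j}^k(\ell+1-j)\frac{(2k+3)!!}{(2\ell+3)!!}(2a^2)^{\ell-j}-\sum_{\ell=j}^k(\ell-j)\frac{(2k+1)!!}{(2\ell+1)!!}(2a^2)^{\ell-j}\big]$ ($0\le j\le k$); $\alpha_{2k,2j+1}=2a\,c_{j,k}\big[\sum_{\ell=j}^{k-1}(\ell+1-j)\frac{(2k+3)!!}{(2\ell+5)!!}(2a^2)^{\ell-j}-\sum_{\ell=j}^{k-1}(\ell-j)\frac{(2k+1)!!}{(2\ell+3)!!}(2a^2)^{\ell-j}\big]$ ($0\le j\le k-1$); $\beta_{2k+1,2j}=a\,c_{j,k}\big[\frac{2j+1}{2k+3}(2a^2)^{k-j}+2\sum_{\ell=j}^k(\ell+1-j)\frac{(2k+1)!!}{(2\ell+3)!!}(2a^2)^{\ell-j}\big]$;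 $\beta_{2k+1,2j+1}=c_{j,k}\big[\frac{2j+3}{2k+3}(2a^2)^{k-j}+2\sum_{\ell=j}^k(\ell-j)\frac{(2k+1)!!}{(2\ell+3)!!}(2a^2)^{\ell-j}\big]$ ($0\le j\le k$). *)

(* Defs.v *)
From mathcomp Require Import all_boot all_order all_algebra.
Set Implicit Arguments. Unset Strict Implicit. Unset Printing Implicit Defensive.
Import Order.TTheory GRing.Theory Num.Theory.
Local Open Scope ring_scope.

Fixpoint dfact (n : nat) : nat :=
  match n with
  | 0 => 1
  | 1 => 1
  | (n'.+2) as m => (m * dfact n')%N
  end.

Section Defs.
Variable C : numClosedFieldType.

Definition e_ (k : nat) (x : C) : C := \sum_(j < k.+1) x ^+ j / (j`!)%:R.

(* e_{k-1} with the convention e_{-1} = 0 *)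
Definition e_pred (k : nat) (x : C) : C :=
  match k with 0 => 0 | k'.+1 => e_ k' x end.

Definition f_ (k : nat) (x : C) : C := (k.+1)%:R * e_ k x - x * e_pred k x.

Definition dfR (n : nat) : C := (dfact n)%:R.

Definition kappa (m : nat) (z w : C) : C :=
  sqrtC 2 * \sum_(n < m) \sum_(l < n.+1)
    ((sqrtC 2 * z) ^+ (2 * n).+1 / dfR (2 * n).+1 * (sqrtC 2 * w) ^+ (2 * l) / dfR (2 * l)
   - (sqrtC 2 * w) ^+ (2 * n).+1 / dfR (2 * n).+1 * (sqrtC 2 * z) ^+ (2 * l) / dfR (2 * l)).

Definition cjk (a : C) (j k : nat) : C :=
  (2 ^+ j * f_ j (a ^+ 2)) / (2 ^+ k * f_ k (a ^+ 2)).

Definition alpha_even (a : C) (k j : nat) : C :=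
  cjk a j k *
  (\sum_(j <= l < k.+1) (l.+1 - j)%:R * (dfR (2 * k + 3) / dfR (2 * l + 3)) * (2 * a ^+ 2) ^+ (l - j)
 - \sum_(j <= l < k.+1) (l - j)%:R * (dfR (2 * k + 1) / dfR (2 * l + 1)) * (2 * a ^+ 2) ^+ (l - j)).

Definition alpha_odd (a : C) (k j : nat) : C :=
  2 * a * cjk a j k *
  (\sum_(j <= l < k) (l.+1 - j)%:R * (dfR (2 * k + 3) / dfR (2 * l + 5)) * (2 * a ^+ 2) ^+ (l - j)
 - \sum_(j <= l < k) (l - j)%:R * (dfR (2 * k + 1) / dfR (2 * l + 3)) * (2 * a ^+ 2) ^+ (l - j)).

Definition beta_even (a : C) (k j : nat) : C :=
  a * cjk a j k *
  ((2 * j).+1%:R / (2 * k + 3)%:R * (2 * a ^+ 2) ^+ (k - j)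
   + 2 * \sum_(j <= l < k.+1) (l.+1 - j)%:R * (dfR (2 * k + 1) / dfR (2 * l + 3)) * (2 * a ^+ 2) ^+ (l - j)).

Definition beta_odd (a : C) (k j : nat) : C :=
  cjk a j k *
  ((2 * j + 3)%:R / (2 * k + 3)%:R * (2 * a ^+ 2) ^+ (k - j)
   + 2 * \sum_(j <= l < k.+1) (l - j)%:R * (dfR (2 * k + 1) / dfR (2 * l + 3)) * (2 * a ^+ 2) ^+ (l - j)).

(* q_{2k}^{(pre)}(z) = sum_{j=0}^{2k} alpha_{2k,j} z^j *)
Definition q_even (k : nat) (a z : C) : C :=
  \sum_(j < k.+1) alpha_even a k j * z ^+ (2 * j)
  + \sum_(j < k) alpha_odd a k j * z ^+ (2 * j).+1.

(* q_{2k+1}^{(pre)}(z) = sum_{j=0}^{2k+1} beta_{2k+1,j} z^j *)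
Definition q_odd (k : nat) (a z : C) : C :=
  \sum_(j < k.+1) (beta_even a k j * z ^+ (2 * j) + beta_odd a k j * z ^+ (2 * j).+1).

Definition Lm (m : nat) (z a : C) : C :=
  (2 * (z - a) ^+ 2 - 1) * kappa m z a + 2 * (z - a) * e_ (2 * m - 1) (2 * z * a)
  - (z - a) * (2 ^+ m.+1 * z ^+ (2 * m) / dfR (2 * m - 1)) * e_ (m - 1) (a ^+ 2).

End Defs.

(* Main.v *)
Require Import Defs.
From mathcomp Require Import all_boot all_order all_algebra.
From mathcomp Require Import ring lra zify.
Import Order.TTheory GRing.Theory Num.Theory.
Local Open Scope ring_scope.

Lemma dfact_gt0 n : (0 < dfact n)%N /\ (0 < dfact n.+1)%N.
Proof. elim: n => [|n [h1 h2]]; split => //=; rewrite muln_gt0 h1; by []. Qed.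

Lemma dfR_neq0 (C : numClosedFieldType) n : dfR C n != 0.
Proof. by rewrite /dfR pnatr_eq0 -lt0n; case: (dfact_gt0 n). Qed.

Lemma dfRS (C : numClosedFieldType) n : dfR C n.+2 = n.+2%:R * dfR C n.
Proof. by rewrite /dfR /= natrM. Qed.

Lemma dfact_even l : dfact (2 * l) = (2 ^ l * l`!)%N.
Proof.
elim: l => [|l IH] //. rewrite mulnS /= IH factS expnS. lia.
Qed.

Lemma fact_odd n : (2 * n + 1)`! = (dfact (2 * n + 1) * 2 ^ n * n`!)%N.
Proof.
elim: n => [|n IH] //. 
have -> : (2 * n.+1 + 1 = (2 * n + 1).+2)%N by lia.
rewrite factS factS IH /= expnS factS. lia.
Qed.

Lemma e_S (C : numClosedFieldType) k (x : C) : e_ k.+1 x = e_ k x + x ^+ k.+1 / (k.+1)`!%:R.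
Proof. by rewrite /e_ big_ord_recr. Qed.

Lemma e_0 (C : numClosedFieldType) (x : C) : e_ 0 x = 1.
Proof. by rewrite /e_ big_ord1 expr0 fact0 divr1. Qed.

Lemma fact_neq0 (C : numClosedFieldType) n : n`!%:R != 0 :> C.
Proof. by rewrite pnatr_eq0 -lt0n fact_gt0. Qed.

Lemma dfact_pos n : (0 < dfact n)%N. Proof. by case: (dfact_gt0 n). Qed.
Lemma posnat (C : numClosedFieldType) n m : n%:R + (m.+1)%:R != 0 :> C.
Proof. by rewrite -natrD pnatr_eq0 addnS. Qed.
Lemma posnat' (C : numClosedFieldType) n m : (m.+1)%:R + n%:R != 0 :> C.
Proof. by rewrite addrC posnat. Qed.
Ltac nzt1 := rewrite ?nat1r -?natrD -?natrM ?pnatr_eq0 -?lt0n ?fact_gt0 ?dfact_pos /=; try lia; try (exact: posnat); try (exact: posnat').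
Ltac nzt := repeat first [apply/andP; split | apply: mulf_neq0 | apply: expf_neq0 | apply: invr_neq0]; try assumption; nzt1.

Lemma f_alt (C : numClosedFieldType) k (x : C) :
  f_ k x = (k.+1%:R - x) * e_ k x + k.+1%:R * x ^+ k.+1 / (k.+1)`!%:R.
Proof.
rewrite /f_; case: k => [|k] /=.
  by rewrite e_0 factS fact0 !expr1; field.
rewrite e_S factS natrM exprS.
have h1 := fact_neq0 C k.+1. have h2 : k.+2%:R != 0 :> C by rewrite pnatr_eq0.
rewrite !factS !natrM !exprS. field.
nzt.
Qed.


Lemma f_S (C : numClosedFieldType) k (x : C) : f_ k.+1 x = f_ k x + e_ k.+1 x.
Proof.
rewrite !f_alt e_S !factS !natrM !exprS. field. nzt.
Qed.

Lemma e_ge0 (C : numClosedFieldType) k (x : C) : 0 <= x -> 0 <= e_ k x.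
Proof.
move=> hx; apply: sumr_ge0 => i _; apply: divr_ge0; [exact: exprn_ge0 | exact: ler0n].
Qed.

Lemma f_gt0 (C : numClosedFieldType) k (x : C) : 0 <= x -> 0 < f_ k x.
Proof.
move=> hx; elim: k => [|k IH].
  rewrite /f_ /= e_0 mulr0 subr0 mulr1; exact: ltr01.
rewrite f_S; apply: ltr_wpDr => //; exact: e_ge0.
Qed.

Definition Kp (C : numClosedFieldType) n (z w : C) :=
  2 ^+ n.+1 / dfR C (2 * n).+1 *
  (z * (z ^+ 2) ^+ n * e_ n (w ^+ 2) - w * (w ^+ 2) ^+ n * e_ n (z ^+ 2)).
Arguments Kp {C}.

Lemma sq_odd (C : numClosedFieldType) (s y : C) n : s ^+ 2 = 2 -> (s * y) ^+ (2 * n).+1 = s * (y * 2 ^+ n * (y ^+ 2) ^+ n).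
Proof. move=> hs; rewrite exprS exprM (exprMn_comm 2 (mulrC s y)) hs exprMn; ring. Qed.

Lemma sq_even (C : numClosedFieldType) (s y : C) n : s ^+ 2 = 2 -> (s * y) ^+ (2 * n) = 2 ^+ n * (y ^+ 2) ^+ n.
Proof. move=> hs; rewrite exprM (exprMn_comm 2 (mulrC s y)) hs exprMn; ring. Qed.

Lemma dfR_even (C : numClosedFieldType) l : dfR C (2 * l) = 2 ^+ l * l`!%:R.
Proof. by rewrite /dfR dfact_even natrM natrX. Qed.

Lemma kappa_cl (C : numClosedFieldType) m (z w : C) : kappa m z w = \sum_(n < m) Kp n z w.
Proof.
rewrite /kappa big_distrr /=. apply: eq_bigr => n _. rewrite /Kp /e_.
set s := sqrtC 2. have hs : s ^+ 2 = 2 by rewrite /s sqrtCK.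
rewrite mulr_sumr !mulr_sumr -sumrB mulr_sumr. apply: eq_bigr => l _.
rewrite !sq_odd // !sq_even // !dfR_even.
have hd := dfR_neq0 C (2 * n).+1.
transitivity (s ^+ 2 * (2 ^+ n / dfR C (2 * n).+1 * (z * (z ^+ 2) ^+ n * ((w ^+ 2) ^+ l / l`!%:R) - w * (w ^+ 2) ^+ n * ((z ^+ 2) ^+ l / l`!%:R)))).
  field. rewrite hd expf_neq0 //=; nzt.

rewrite hs (exprS (2:C) n). ring.
Qed.

Lemma Lm_S (C : numClosedFieldType) m (z a : C) :
  Lm m.+1 z a = (2 * (z - a) ^+ 2 - 1) * kappa m.+1 z a + 2 * (z - a) * e_ (2 * m).+1 (2 * z * a)
  - (z - a) * (2 ^+ m.+2 * (z ^+ 2) ^+ m.+1 / dfR C (2 * m).+1) * e_ m (a ^+ 2).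
Proof.
rewrite /Lm. have -> : (2 * m.+1 - 1 = (2 * m).+1)%N by lia.
by rewrite subn1 /= exprM.
Qed.

Lemma Lm_inc (C : numClosedFieldType) m (z a : C) :
  Lm m.+2 z a = Lm m.+1 z a + (2 * (z - a) ^+ 2 - 1) * Kp m.+1 z a
  + 2 * (z - a) * ((2 * z * a) ^+ (2 * m).+2 / ((2 * m).+2)`!%:R + (2 * z * a) ^+ (2 * m).+3 / ((2 * m).+3)`!%:R)
  - (z - a) * (2 ^+ m.+3 * (z ^+ 2) ^+ m.+2 / dfR C (2 * m).+3 * e_ m.+1 (a ^+ 2)
              - 2 ^+ m.+2 * (z ^+ 2) ^+ m.+1 / dfR C (2 * m).+1 * e_ m (a ^+ 2)).
Proof.
rewrite !Lm_S (kappa_cl _ m.+2) big_ord_recr -kappa_cl /=.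
have -> : (2 * m.+1).+1 = (2 * m).+3 by lia.

rewrite !e_S. ring.
Qed.

Definition Bc (C : numClosedFieldType) (a : C) k j :=
  (2 * j + 1)%:R / dfR C (2 * k + 3) * (2 * a ^+ 2) ^+ (k - j)
  + 2 * \sum_(j <= l < k.+1) (l.+1 - j)%:R / dfR C (2 * l + 3) * (2 * a ^+ 2) ^+ (l - j).
Definition Dc (C : numClosedFieldType) (a : C) k j :=
  (2 * j + 3)%:R / dfR C (2 * k + 3) * (2 * a ^+ 2) ^+ (k - j)
  + 2 * \sum_(j <= l < k.+1) (l - j)%:R / dfR C (2 * l + 3) * (2 * a ^+ 2) ^+ (l - j).
Arguments Bc {C}. Arguments Dc {C}.

Lemma dfR3 (C : numClosedFieldType) k : dfR C (2 * k + 3) = (2 * k + 3)%:R * dfR C (2 * k + 1).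
Proof. have -> : (2*k+3 = (2*k+1).+2)%N by lia. by rewrite dfRS. Qed.

Lemma dfR5 (C : numClosedFieldType) k : dfR C (2 * k.+1 + 3) = (2 * k + 5)%:R * dfR C (2 * k + 3).
Proof. have -> : (2*k.+1+3 = (2*k+3).+2)%N by lia. rewrite dfRS; congr (_ * _); congr (_%:R); lia. Qed.

Lemma Bc_step (C : numClosedFieldType) (a : C) k j : (j <= k)%N ->
  Bc a k.+1 j = Bc a k j + (2 * a ^+ 2) ^+ (k - j) * (2 * a ^+ 2 - (2 * j + 1)%:R) / dfR C (2 * k + 3).
Proof.
move=> hjk. rewrite /Bc big_nat_recr /=; last by lia.
have -> : (k.+1 - j = (k - j).+1)%N by lia.
have -> : (k.+2 - j = (k - j).+2)%N by lia.
rewrite dfR5. set A := 2 * a ^+ 2. set i := (k - j)%N.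
have hk : k = (i + j)%N by rewrite /i subnK.
rewrite (exprS A i). clearbody i. subst k.
have h1 := dfR_neq0 C (2 * (i + j) + 3).
field. nzt.
Qed.

Lemma Dc_step (C : numClosedFieldType) (a : C) k j : (j <= k)%N ->
  Dc a k.+1 j = Dc a k j + (2 * a ^+ 2) ^+ (k - j) * (2 * a ^+ 2 - (2 * j + 3)%:R) / dfR C (2 * k + 3).
Proof.
move=> hjk. rewrite /Dc big_nat_recr /=; last by lia.
have -> : (k.+1 - j = (k - j).+1)%N by lia.
rewrite dfR5. set A := 2 * a ^+ 2. set i := (k - j)%N.
have hk : k = (i + j)%N by rewrite /i subnK.
rewrite (exprS A i). clearbody i. subst k.
have h1 := dfR_neq0 C (2 * (i + j) + 3).
field. nzt.
Qed.

Lemma Bc_diag (C : numClosedFieldType) (a : C) m : Bc a m m = 1 / dfR C (2 * m + 1).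
Proof.
rewrite /Bc big_nat1 subnn expr0 subSnn dfR3.
have h1 := dfR_neq0 C (2 * m + 1). field. nzt.
Qed.

Lemma Dc_diag (C : numClosedFieldType) (a : C) m : Dc a m m = 1 / dfR C (2 * m + 1).
Proof.
rewrite /Dc big_nat1 subnn expr0 dfR3.
have h1 := dfR_neq0 C (2 * m + 1). field. nzt.
Qed.

Lemma beta_even_link (C : numClosedFieldType) (a : C) k j : f_ k (a ^+ 2) != 0 ->
  beta_even a k j = dfR C (2 * k + 1) / (2 ^+ k * f_ k (a ^+ 2)) * (a * 2 ^+ j * f_ j (a ^+ 2) * Bc a k j).
Proof.
move=> hF. rewrite /beta_even /Bc /cjk.
set A := 2 * a ^+ 2.
have -> : \sum_(j <= l < k.+1) (l.+1 - j)%:R * (dfR C (2 * k + 1) / dfR C (2 * l + 3)) * A ^+ (l - j)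
  = dfR C (2 * k + 1) * \sum_(j <= l < k.+1) (l.+1 - j)%:R / dfR C (2 * l + 3) * A ^+ (l - j).
  rewrite mulr_sumr; apply: eq_bigr => l _; ring.
rewrite dfR3. have h1 := dfR_neq0 C (2 * k + 1). field. rewrite hF h1 /=. nzt.
Qed.

Lemma beta_odd_link (C : numClosedFieldType) (a : C) k j : f_ k (a ^+ 2) != 0 ->
  beta_odd a k j = dfR C (2 * k + 1) / (2 ^+ k * f_ k (a ^+ 2)) * (2 ^+ j * f_ j (a ^+ 2) * Dc a k j).
Proof.
move=> hF. rewrite /beta_odd /Dc /cjk.
set A := 2 * a ^+ 2.
have -> : \sum_(j <= l < k.+1) (l - j)%:R * (dfR C (2 * k + 1) / dfR C (2 * l + 3)) * A ^+ (l - j)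
  = dfR C (2 * k + 1) * \sum_(j <= l < k.+1) (l - j)%:R / dfR C (2 * l + 3) * A ^+ (l - j).
  rewrite mulr_sumr; apply: eq_bigr => l _; ring.
rewrite dfR3. have h1 := dfR_neq0 C (2 * k + 1). field. rewrite hF h1 /=. nzt.
Qed.

Definition Qo (C : numClosedFieldType) (a z : C) k :=
  \sum_(j < k.+1) 2 ^+ j * f_ j (a ^+ 2) * (a * Bc a k j * (z ^+ 2) ^+ j + Dc a k j * (z * (z ^+ 2) ^+ j)).
Arguments Qo {C}.

Lemma q_odd_link (C : numClosedFieldType) (a z : C) k : f_ k (a ^+ 2) != 0 ->
  q_odd k a z = dfR C (2 * k + 1) / (2 ^+ k * f_ k (a ^+ 2)) * Qo a z k.
Proof.
move=> hF. rewrite /q_odd /Qo mulr_sumr. apply: eq_bigr => j _.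
rewrite beta_even_link // beta_odd_link // (exprS z (2 * j)) !(exprM z 2 j). ring.
Qed.

Definition gg (C : numClosedFieldType) (a z : C) j :=
  a * (2 * a ^+ 2 - (2 * j + 1)%:R) * (z ^+ 2) ^+ j + (2 * a ^+ 2 - (2 * j + 3)%:R) * (z * (z ^+ 2) ^+ j).
Arguments gg {C}.

Fixpoint Sf (C : numClosedFieldType) (a z : C) m : C :=
  match m with 0 => 0 | m'.+1 => a ^+ 2 * Sf C a z m' + f_ m' (a ^+ 2) * gg a z m' end.
Arguments Sf {C}.

Lemma sumS (C : numClosedFieldType) (a z : C) k :
  \sum_(j < k.+1) 2 ^+ j * f_ j (a ^+ 2) * (2 * a ^+ 2) ^+ (k - j) * gg a z j = 2 ^+ k * Sf a z k.+1.
Proof.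
elim: k => [|k IH].
  rewrite big_ord1 /= subnn !expr0; ring.
rewrite big_ord_recr /= subnn expr0.
have -> : \sum_(j < k.+1) 2 ^+ j * f_ j (a ^+ 2) * (2 * a ^+ 2) ^+ (k.+1 - j) * gg a z j
   = 2 * a ^+ 2 * \sum_(j < k.+1) 2 ^+ j * f_ j (a ^+ 2) * (2 * a ^+ 2) ^+ (k - j) * gg a z j.
  rewrite mulr_sumr; apply: eq_bigr => j _.
  have -> : (k.+1 - j = (k - j).+1)%N by have := ltn_ord j; lia.
  rewrite (exprS (2 * a ^+ 2)); ring.
rewrite IH /= (exprS (2 : C) k). ring.
Qed.

Lemma Qo_step (C : numClosedFieldType) (a z : C) k :
  Qo a z k.+1 = Qo a z k + (2 ^+ k * Sf a z k.+1
     + 2 ^+ k.+1 * f_ k.+1 (a ^+ 2) * (a * (z ^+ 2) ^+ k.+1 + z * (z ^+ 2) ^+ k.+1)) / dfR C (2 * k + 3).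
Proof.
rewrite /Qo big_ord_recr /= Bc_diag Dc_diag.
have -> : (2 * k.+1 + 1 = 2 * k + 3)%N by lia.
rewrite -sumS.
have -> : \sum_(j < k.+1) 2 ^+ j * f_ j (a ^+ 2) *
     (a * Bc a k.+1 j * (z ^+ 2) ^+ j + Dc a k.+1 j * (z * (z ^+ 2) ^+ j))
  = \sum_(j < k.+1) (2 ^+ j * f_ j (a ^+ 2) *
     (a * Bc a k j * (z ^+ 2) ^+ j + Dc a k j * (z * (z ^+ 2) ^+ j))
     + 2 ^+ j * f_ j (a ^+ 2) * (2 * a ^+ 2) ^+ (k - j) * gg a z j / dfR C (2 * k + 3)).
  apply: eq_bigr => j _.
  have hj : (j <= k)%N by have := ltn_ord j; lia.
  rewrite Bc_step // Dc_step // /gg.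
  have h1 := dfR_neq0 C (2 * k + 3). field. nzt.
rewrite big_split /= -mulr_suml.
have h1 := dfR_neq0 C (2 * k + 3). field. nzt.
Qed.

Lemma f_0 (C : numClosedFieldType) (x : C) : f_ 0 x = 1.
Proof. by rewrite /f_ /= e_0 mulr0 subr0 mulr1. Qed.

Ltac lin1 H c := apply/eqP; rewrite -subr_eq0; apply/eqP;
  match type of H with ?l = ?r => transitivity (c * (l - r)); [ | by rewrite H subrr mulr0] end.

Lemma Estep (C : numClosedFieldType) (a z : C) k :
 (z - a) ^+ 3 * (Sf a z k.+1 + 2 * f_ k.+1 (a ^+ 2) * (a * (z ^+ 2) ^+ k.+1 + z * (z ^+ 2) ^+ k.+1))
 = (z - a) ^+ 2 * (2 * f_ k.+1 (a ^+ 2) * (z ^+ 2) ^+ k.+2 - (2 * k + 3)%:R * f_ k (a ^+ 2) * (z ^+ 2) ^+ k.+1)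
 + a * ((2 * (z - a) ^+ 2 - 1) * (z * (z ^+ 2) ^+ k.+1 * e_ k.+1 (a ^+ 2) - a * (a ^+ 2) ^+ k.+1 * e_ k.+1 (z ^+ 2))
   + (z - a) * (z ^+ 2) ^+ k.+1 * (a ^+ 2) ^+ k.+1 * ((2 * k + 3)%:R + 2 * z * a) / (k.+1)`!%:R
   - (z - a) * (2 * (z ^+ 2) ^+ k.+2 * e_ k.+1 (a ^+ 2) - (2 * k + 3)%:R * (z ^+ 2) ^+ k.+1 * e_ k (a ^+ 2))).
Proof.
elim: k => [|k IH].
  rewrite /= mulr0 add0r f_S !f_0 /gg (e_S _ 0 (a ^+ 2)) (e_S _ 0 (z ^+ 2)) !e_0 ?fact0 ?factS ?fact0.
  rewrite !(exprS (z ^+ 2)) !(exprS (a ^+ 2)) !expr0. by field.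
rewrite /=. rewrite [Sf a z k.+1]/= in IH.
rewrite (f_S _ k.+1) !(f_S _ k) (e_S _ k.+1 (a ^+ 2)) (e_S _ k.+1 (z ^+ 2)) !(e_S _ k (a ^+ 2)) !f_alt in IH *.
rewrite !factS !(exprS (z ^+ 2)) !(exprS (a ^+ 2)) in IH *.
lin1 IH (a ^+ 2).
rewrite /gg !natrM !(exprS (z ^+ 2)). have hk := fact_neq0 C k.
move: hk. move: (Sf a z k) (e_ k (a ^+ 2)) (e_ k.+1 (z ^+ 2)) ((a ^+ 2) ^+ k) ((z ^+ 2) ^+ k) (k`!%:R : C) => S E1 E2 P V W hk.
field. nzt.
Qed.

Ltac lin2 H1 c1 H2 c2 := apply/eqP; rewrite -subr_eq0; apply/eqP;
  match type of H1 with ?l1 = ?r1 => match type of H2 with ?l2 = ?r2 =>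
  transitivity (c1 * (l1 - r1) + c2 * (l2 - r2)); [ | by rewrite H1 H2 !subrr !mulr0 addr0] end end.

Lemma pw2 (C : numClosedFieldType) (z a : C) k : (2 * z * a) ^+ (2 * k) = 2 ^+ k * 2 ^+ k * (z ^+ 2) ^+ k * (a ^+ 2) ^+ k.
Proof. rewrite exprM -!exprMn; congr (_ ^+ _); ring. Qed.

Lemma QC (C : numClosedFieldType) (a z : C) k :
  (z - a) ^+ 3 * Qo a z k = 2 ^+ k * f_ k (a ^+ 2) / dfR C (2 * k + 1) * (z - a) ^+ 2 * (z ^+ 2) ^+ k.+1
    + a / 4 * Lm k.+1 z a.
Proof.
elim: k => [|k IH].
  rewrite /Qo big_ord1 Bc_diag Dc_diag Lm_S kappa_cl big_ord1 /Kp f_0 /= !e_S !e_0 /dfR /=.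
  rewrite !muln0 ?factS ?fact0 /=. field. nzt.
rewrite Qo_step Lm_inc.
have E := Estep _ a z k.
lin2 IH (1 : C) E (2 ^+ k / dfR C (2 * k + 3)).
rewrite /Kp.
have -> : dfR C (2 * k.+1 + 1) = dfR C (2 * k + 3) by congr dfR; lia.
have -> : dfR C (2 * k.+1).+1 = dfR C (2 * k + 3) by congr dfR; lia.
have -> : dfR C (2 * k).+3 = dfR C (2 * k + 3) by congr dfR; lia.
have -> : dfR C (2 * k).+1 = dfR C (2 * k + 1) by congr dfR; lia.
have -> : ((2 * k).+2)`! = ((2 * k).+2 * (2 * k + 1)`!)%N by rewrite factS addn1.
have -> : ((2 * k).+3)`! = ((2 * k).+3 * ((2 * k).+2 * (2 * k + 1)`!))%N by rewrite !factS addn1.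
rewrite fact_odd (factS k) !(exprS (2 * z * a)) pw2 !natrM natrX -/(dfR C (2 * k + 1)) dfR3.
rewrite !(exprS (2 : C)) !(exprS (z ^+ 2)) !(exprS (a ^+ 2)).
have h1 := dfR_neq0 C (2 * k + 1). have h2 := fact_neq0 C k.
have h3 : (2 ^+ k : C) != 0 by apply: expf_neq0; nzt.
move: h1 h2 h3. move: (Qo a z k) (Sf a z k.+1) (Lm k.+1 z a) (f_ k (a ^+ 2)) (f_ k.+1 (a ^+ 2))
  (e_ k.+1 (a ^+ 2)) (e_ k (a ^+ 2)) (e_ k.+1 (z ^+ 2)) ((a ^+ 2) ^+ k) ((z ^+ 2) ^+ k) (2 ^+ k : C)
  (dfR C (2 * k + 1)) (k`!%:R : C) => Q S L F0 F1 E1 E0 E2 P V T D W h1 h2 h3.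
field. nzt.
Qed.

Lemma OC (C : numClosedFieldType) (a z : C) k : f_ k (a ^+ 2) != 0 ->
  (z - a) ^+ 3 * q_odd k a z
    = (z - a) ^+ 2 * z ^+ (2 * k + 2)
      + a * (dfR C (2 * k + 1) / (2 ^+ (k + 2) * f_ k (a ^+ 2))) * Lm (k + 1) z a.
Proof.
move=> hF. rewrite q_odd_link // mulrCA QC.
have -> : (2 * k + 2 = 2 * k.+1)%N by lia.
rewrite exprM addn2 !(exprS (2 : C)) !addn1.
have h1 := dfR_neq0 C (2 * k + 1). field. nzt.
Qed.

Definition Us (C : numClosedFieldType) (a : C) k j :=
  \sum_(j <= l < k.+1) (l.+1 - j)%:R / dfR C (2 * l + 3) * (2 * a ^+ 2) ^+ (l - j).
Definition Vs (C : numClosedFieldType) (a : C) k j :=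
  \sum_(j <= l < k.+1) (l - j)%:R / dfR C (2 * l + 1) * (2 * a ^+ 2) ^+ (l - j).
Arguments Us {C}. Arguments Vs {C}.

Lemma VU (C : numClosedFieldType) (a : C) i j :
  Vs a (i + j) j = 2 * a ^+ 2 * Us a (i + j) j - (i.+1)%:R * (2 * a ^+ 2) ^+ i.+1 / dfR C (2 * (i + j) + 3).
Proof.
elim: i => [|i IH].
  rewrite /Vs /Us !add0n !big_nat1 !subnn subSnn !expr0.
  have h1 := dfR_neq0 C (2 * j + 3). field. nzt.
rewrite addSn.
have HV : Vs a (i + j).+1 j = Vs a (i + j) j + ((i + j).+1 - j)%:R / dfR C (2 * (i + j).+1 + 1) * (2 * a ^+ 2) ^+ ((i + j).+1 - j).
  by rewrite /Vs big_nat_recr //=; lia.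
have HU : Us a (i + j).+1 j = Us a (i + j) j + ((i + j).+2 - j)%:R / dfR C (2 * (i + j).+1 + 3) * (2 * a ^+ 2) ^+ ((i + j).+1 - j).
  by rewrite /Us big_nat_recr //=; lia.
rewrite HV HU IH.
have -> : ((i + j).+1 - j = i.+1)%N by lia.
have -> : ((i + j).+2 - j = i.+2)%N by lia.
have -> : (2 * (i + j).+1 + 1 = 2 * (i + j) + 3)%N by lia.
rewrite dfR5. set A := 2 * a ^+ 2.
rewrite !(exprS A).
have h1 := dfR_neq0 C (2 * (i + j) + 3). field. nzt.
Qed.

Lemma Id_even (C : numClosedFieldType) (a : C) k j : (j <= k)%N ->
  f_ k (a ^+ 2) != 0 -> f_ k.+1 (a ^+ 2) != 0 ->
  a * f_ k (a ^+ 2) * alpha_even a k j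
  = f_ k.+1 (a ^+ 2) * beta_even a k.+1 j - a ^+ 2 * f_ k (a ^+ 2) * beta_even a k j.
Proof.
move=> hjk hF hF1.
rewrite !beta_even_link // Bc_step // /alpha_even /cjk.
have -> : \sum_(j <= l < k.+1) (l.+1 - j)%:R * (dfR C (2 * k + 3) / dfR C (2 * l + 3)) * (2 * a ^+ 2) ^+ (l - j)
  = dfR C (2 * k + 3) * Us a k j.
  rewrite /Us mulr_sumr; apply: eq_bigr => l _; ring.
have -> : \sum_(j <= l < k.+1) (l - j)%:R * (dfR C (2 * k + 1) / dfR C (2 * l + 1)) * (2 * a ^+ 2) ^+ (l - j)
  = dfR C (2 * k + 1) * Vs a k j.
  rewrite /Vs mulr_sumr; apply: eq_bigr => l _; ring.
rewrite /Bc -/(Us a k j).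
have hk : k = ((k - j) + j)%N by rewrite subnK.
rewrite [in Vs a k j]hk VU -hk.
have -> : (2 * k.+1 + 1 = 2 * k + 3)%N by lia.
rewrite dfR3.
set A := 2 * a ^+ 2. set i := (k - j)%N. rewrite (exprS A i).
have h1 := dfR_neq0 C (2 * k + 1).
have h3 : (2 ^+ k : C) != 0 by apply: expf_neq0; nzt.
rewrite (exprS (2 : C) k).
move: hF hF1 h1 h3. move: (Us a k j) (f_ k (a ^+ 2)) (f_ k.+1 (a ^+ 2)) (dfR C (2 * k + 1)) (2 ^+ k : C) => U F0 F1 D T hF hF1 h1 h3.
have hk2 : k = (i + j)%N by rewrite /i subnK. clear hk. clearbody i. subst k.
rewrite /A. field. nzt.
Qed.

Definition Ups (C : numClosedFieldType) (a : C) k j :=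
  \sum_(j <= l < k) (l.+1 - j)%:R / dfR C (2 * l + 5) * (2 * a ^+ 2) ^+ (l - j).
Definition Ys (C : numClosedFieldType) (a : C) k j :=
  \sum_(j <= l < k.+1) (l - j)%:R / dfR C (2 * l + 3) * (2 * a ^+ 2) ^+ (l - j).
Definition Vps (C : numClosedFieldType) (a : C) k j :=
  \sum_(j <= l < k) (l - j)%:R / dfR C (2 * l + 3) * (2 * a ^+ 2) ^+ (l - j).
Arguments Ups {C}. Arguments Ys {C}. Arguments Vps {C}.

Lemma YV (C : numClosedFieldType) (a : C) k j : (j <= k)%N ->
  Vps a k j = Ys a k j - (k - j)%:R / dfR C (2 * k + 3) * (2 * a ^+ 2) ^+ (k - j).
Proof. move=> h. rewrite /Ys big_nat_recr //= -/(Vps a k j). ring. Qed.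

Lemma UY (C : numClosedFieldType) (a : C) i j :
  2 * a ^+ 2 * Ups a (i + j) j = Ys a (i + j) j.
Proof.
elim: i => [|i IH].
  by rewrite /Ups /Ys add0n big_geq // big_nat1 subnn mul0r mul0r mulr0.
rewrite addSn.
have HU : Ups a (i + j).+1 j = Ups a (i + j) j + ((i + j).+1 - j)%:R / dfR C (2 * (i + j) + 5) * (2 * a ^+ 2) ^+ ((i + j) - j).
  by rewrite /Ups big_nat_recr //=; lia.
have HY : Ys a (i + j).+1 j = Ys a (i + j) j + ((i + j).+1 - j)%:R / dfR C (2 * (i + j).+1 + 3) * (2 * a ^+ 2) ^+ ((i + j).+1 - j).
  by rewrite /Ys big_nat_recr //=; lia.
rewrite HU HY -IH.
have -> : ((i + j).+1 - j = i.+1)%N by lia.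
have -> : (i + j - j = i)%N by lia.
have -> : (2 * (i + j).+1 + 3 = 2 * (i + j) + 5)%N by lia.
rewrite (exprS (2 * a ^+ 2)). ring.
Qed.

Lemma alpha_odd_kk (C : numClosedFieldType) (a : C) k : alpha_odd a k k = 0.
Proof. by rewrite /alpha_odd !big_geq // subrr mulr0. Qed.

Lemma Id_odd (C : numClosedFieldType) (a : C) k j : (j <= k)%N ->
  f_ k (a ^+ 2) != 0 -> f_ k.+1 (a ^+ 2) != 0 ->
  a * f_ k (a ^+ 2) * alpha_odd a k j
  = f_ k.+1 (a ^+ 2) * beta_odd a k.+1 j - a ^+ 2 * f_ k (a ^+ 2) * beta_odd a k j.
Proof.
move=> hjk hF hF1.
rewrite !beta_odd_link // Dc_step // /alpha_odd /cjk.
have -> : \sum_(j <= l < k) (l.+1 - j)%:R * (dfR C (2 * k + 3) / dfR C (2 * l + 5)) * (2 * a ^+ 2) ^+ (l - j)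
  = dfR C (2 * k + 3) * Ups a k j.
  rewrite /Ups mulr_sumr; apply: eq_bigr => l _; ring.
have -> : \sum_(j <= l < k) (l - j)%:R * (dfR C (2 * k + 1) / dfR C (2 * l + 3)) * (2 * a ^+ 2) ^+ (l - j)
  = dfR C (2 * k + 1) * Vps a k j.
  rewrite /Vps mulr_sumr; apply: eq_bigr => l _; ring.
rewrite /Dc -/(Ys a k j) YV //.
have hk : k = ((k - j) + j)%N by rewrite subnK.
have E : 2 * a ^+ 2 * Ups a k j = Ys a k j by rewrite [in LHS]hk UY -hk.
have -> : (2 * k.+1 + 1 = 2 * k + 3)%N by lia.
rewrite dfR3.
set A := 2 * a ^+ 2. set i := (k - j)%N.
have h1 := dfR_neq0 C (2 * k + 1).
have h3 : (2 ^+ k : C) != 0 by apply: expf_neq0; nzt.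
rewrite (exprS (2 : C) k).
lin1 E (2 ^+ j * f_ j (a ^+ 2) * ((2 * k + 3)%:R * dfR C (2 * k + 1)) / 2 ^+ k).
move: hF hF1 h1 h3. move: (Ups a k j) (Ys a k j) (f_ k (a ^+ 2)) (f_ k.+1 (a ^+ 2)) (dfR C (2 * k + 1)) (2 ^+ k : C) => U Y F0 F1 D T hF hF1 h1 h3.
have hk2 : k = (i + j)%N by rewrite /i subnK. clear hk E. clearbody i. subst k.
rewrite /A. field. nzt.
Qed.

Lemma Id_q (C : numClosedFieldType) (a z : C) k :
  f_ k (a ^+ 2) != 0 -> f_ k.+1 (a ^+ 2) != 0 ->
  a * f_ k (a ^+ 2) * q_even k a z
  = f_ k.+1 (a ^+ 2) * q_odd k.+1 a z - a ^+ 2 * f_ k (a ^+ 2) * q_odd k a z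
    - f_ k.+1 (a ^+ 2) * (a * (z ^+ 2) ^+ k.+1 + z * (z ^+ 2) ^+ k.+1).
Proof.
move=> hF hF1.
have -> : q_even k a z = \sum_(j < k.+1) (alpha_even a k j * z ^+ (2 * j) + alpha_odd a k j * z ^+ (2 * j).+1).
  rewrite /q_even big_split /=; congr (_ + _).
  by rewrite big_ord_recr /= alpha_odd_kk mul0r addr0.
rewrite [q_odd k.+1 a z]/q_odd (big_ord_recr k.+1) /=.
have hb1 : beta_even a k.+1 k.+1 = a.
  rewrite beta_even_link // Bc_diag. have h1 := dfR_neq0 C (2 * k.+1 + 1).
  have h3 : (2 ^+ k.+1 : C) != 0 by apply: expf_neq0; nzt.
  field. nzt.
have hb2 : beta_odd a k.+1 k.+1 = 1.
  rewrite beta_odd_link // Dc_diag. have h1 := dfR_neq0 C (2 * k.+1 + 1).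
  have h3 : (2 ^+ k.+1 : C) != 0 by apply: expf_neq0; nzt.
  field. nzt.
rewrite hb1 hb2 /q_odd !mulr_sumr.
have -> : \sum_(i < k.+1) a * f_ k (a ^+ 2) * (alpha_even a k i * z ^+ (2 * i) + alpha_odd a k i * z ^+ (2 * i).+1)
  = \sum_(i < k.+1) (f_ k.+1 (a ^+ 2) * (beta_even a k.+1 i * z ^+ (2 * i) + beta_odd a k.+1 i * z ^+ (2 * i).+1)
     - a ^+ 2 * f_ k (a ^+ 2) * (beta_even a k i * z ^+ (2 * i) + beta_odd a k i * z ^+ (2 * i).+1)).
  apply: eq_bigr => j _. have hj : (j <= k)%N by have := ltn_ord j; lia.
  have E1 := @Id_even C a k j hj hF hF1. have E2 := @Id_odd C a k j hj hF hF1.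
  lin2 E1 (z ^+ (2 * j)) E2 (z ^+ (2 * j).+1). ring.
rewrite sumrB -!mulr_sumr.
rewrite (exprS z (2 * k.+1)) (exprM z 2 k.+1). ring.
Qed.

Lemma pow2k (C : numClosedFieldType) (z : C) n : z ^+ (2 * n) = (z ^+ 2) ^+ n.
Proof. by rewrite exprM. Qed.

Lemma EC_nz (C : numClosedFieldType) (a z : C) k : a != 0 ->
  f_ k (a ^+ 2) != 0 -> f_ k.+1 (a ^+ 2) != 0 ->
  (z - a) ^+ 3 * q_even k a z
    = a * (z - a) ^+ 2 * (e_ (k + 1) (a ^+ 2) / f_ k (a ^+ 2)) * z ^+ (2 * k + 2)
      + dfR C (2 * k + 3) / (2 ^+ (k + 3) * f_ k (a ^+ 2)) * Lm (k + 2) z a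
      - a ^+ 2 * (dfR C (2 * k + 1) / (2 ^+ (k + 2) * f_ k (a ^+ 2))) * Lm (k + 1) z a.
Proof.
move=> ha hF hF1.
have hne : a * f_ k (a ^+ 2) != 0 by rewrite mulf_neq0.
apply: (mulfI hne).
have -> : a * f_ k (a ^+ 2) * ((z - a) ^+ 3 * q_even k a z) = (z - a) ^+ 3 * (a * f_ k (a ^+ 2) * q_even k a z) by ring.
rewrite Id_q //.
have O1 := @OC C a z k.+1 hF1. have O0 := @OC C a z k hF.
lin2 O1 (f_ k.+1 (a ^+ 2)) O0 (- (a ^+ 2 * f_ k (a ^+ 2))).
have -> : Lm (k.+1 + 1) z a = Lm k.+2 z a by congr Lm; lia.
have -> : Lm (k + 2) z a = Lm k.+2 z a by congr Lm; lia.
have -> : Lm (k + 1) z a = Lm k.+1 z a by congr Lm; lia.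
have -> : z ^+ (2 * k.+1 + 2) = (z ^+ 2) ^+ k.+2 by rewrite -pow2k; congr (_ ^+ _); lia.
have -> : z ^+ (2 * k + 2) = (z ^+ 2) ^+ k.+1 by rewrite -pow2k; congr (_ ^+ _); lia.
have -> : dfR C (2 * k.+1 + 1) = dfR C (2 * k + 3) by congr dfR; lia.
have -> : (2 : C) ^+ (k.+1 + 2) = 2 ^+ k * 8.
  by rewrite (_ : (k.+1 + 2 = k + 3)%N); [rewrite exprD; ring | lia].
have -> : (2 : C) ^+ (k + 3) = 2 ^+ k * 8 by rewrite exprD; ring.
have -> : (2 : C) ^+ (k + 2) = 2 ^+ k * 4 by rewrite exprD; ring.
rewrite addn1 dfR3 (f_S _ k) in hF1 *.
rewrite !(exprS (z ^+ 2)).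
have h1 := dfR_neq0 C (2 * k + 1).
have h3 : (2 ^+ k : C) != 0 by apply: expf_neq0; nzt.
move: hF hF1 h1 h3. move: (q_odd k a z) (q_odd k.+1 a z) (Lm k.+1 z a) (Lm k.+2 z a) (f_ k (a ^+ 2)) (e_ k.+1 (a ^+ 2))
  (dfR C (2 * k + 1)) (2 ^+ k : C) ((z ^+ 2) ^+ k) => Q0 Q1 L1 L2 F E D T V hF hF1 h1 h3.
field. nzt.
Qed.

Lemma e_at0 (C : numClosedFieldType) k : e_ k (0 : C) = 1.
Proof.
rewrite /e_ big_ord_recl /= expr0 fact0 divr1 big1 ?addr0 // => i _.
by rewrite expr0n /= mul0r.
Qed.

Lemma f_at0 (C : numClosedFieldType) k : f_ k (0 : C) = k.+1%:R.
Proof. by rewrite /f_ e_at0 mul0r subr0 mulr1. Qed.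

Lemma f_at0' (C : numClosedFieldType) k : f_ k ((0 : C) ^+ 2) = k.+1%:R.
Proof. by rewrite expr0n f_at0. Qed.

Lemma Us0 (C : numClosedFieldType) i j : Us (0 : C) (i + j) j = 1 / dfR C (2 * j + 3).
Proof.
elim: i => [|i IH].
  by rewrite /Us add0n big_nat1 subnn subSnn expr0 mulr1.
rewrite addSn.
have HU : Us (0 : C) (i + j).+1 j = Us 0 (i + j) j + ((i + j).+2 - j)%:R / dfR C (2 * (i + j).+1 + 3) * (2 * (0 : C) ^+ 2) ^+ ((i + j).+1 - j).
  by rewrite /Us big_nat_recr //=; lia.
rewrite HU IH.
have -> : ((i + j).+1 - j = i.+1)%N by lia.
by rewrite expr0n /= mulr0 expr0n /= mulr0 addr0.
Qed.

Lemma alpha_even0 (C : numClosedFieldType) k j : (j <= k)%N ->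
  alpha_even (0 : C) k j = 2 ^+ j * j.+1%:R / (2 ^+ k * k.+1%:R) * (dfR C (2 * k + 3) / dfR C (2 * j + 3)).
Proof.
move=> hjk. rewrite /alpha_even /cjk !f_at0'.
have -> : \sum_(j <= l < k.+1) (l.+1 - j)%:R * (dfR C (2 * k + 3) / dfR C (2 * l + 3)) * (2 * (0 : C) ^+ 2) ^+ (l - j)
  = dfR C (2 * k + 3) * Us 0 k j.
  rewrite /Us mulr_sumr; apply: eq_bigr => l _; ring.
have -> : \sum_(j <= l < k.+1) (l - j)%:R * (dfR C (2 * k + 1) / dfR C (2 * l + 1)) * (2 * (0 : C) ^+ 2) ^+ (l - j)
  = dfR C (2 * k + 1) * Vs 0 k j.
  rewrite /Vs mulr_sumr; apply: eq_bigr => l _; ring.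
have hk : k = ((k - j) + j)%N by rewrite subnK.
rewrite hk VU Us0 -hk.
have hz : 2 * (0 : C) ^+ 2 = 0 by rewrite expr0n mulr0.
rewrite hz expr0n /=.
have h1 := dfR_neq0 C (2 * j + 3).
have h3 : (2 ^+ k : C) != 0 by apply: expf_neq0; nzt.
field. nzt.
Qed.

Lemma alpha_odd0 (C : numClosedFieldType) k j : alpha_odd (0 : C) k j = 0.
Proof. by rewrite /alpha_odd mulr0 !mul0r. Qed.

Lemma Kp0 (C : numClosedFieldType) n (z : C) : Kp n z 0 = 2 ^+ n.+1 / dfR C (2 * n).+1 * (z * (z ^+ 2) ^+ n).
Proof. by rewrite /Kp expr0n /= e_at0 !mul0r subr0 mulr1. Qed.

Lemma ZC (C : numClosedFieldType) (z : C) k :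
  z ^+ 3 * \sum_(j < k.+1) 2 ^+ j * j.+1%:R / dfR C (2 * j + 3) * (z ^+ 2) ^+ j = Lm k.+2 z 0 / 8.
Proof.
elim: k => [|k IH].
  rewrite big_ord1 Lm_S kappa_cl !big_ord_recr big_ord0 /= !Kp0 mulr0 !e_at0 /dfR /=.
  rewrite (@expr0n C 2) /= e_at0. field; nzt.
rewrite big_ord_recr /= mulrDr IH (Lm_inc _ k.+1) Kp0 mulr0 !expr0n /= !e_at0.
have -> : dfR C (2 * k.+1 + 3) = dfR C (2 * k + 5) by congr dfR; lia.
have -> : dfR C (2 * k.+2).+1 = dfR C (2 * k + 5) by congr dfR; lia.
have -> : dfR C (2 * k.+1).+3 = dfR C (2 * k + 5) by congr dfR; lia.
have -> : dfR C (2 * k.+1).+1 = dfR C (2 * k + 3) by congr dfR; lia.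
have -> : dfR C (2 * k + 5) = (2 * k + 5)%:R * dfR C (2 * k + 3).
  by rewrite (_ : (2 * k + 5 = (2 * k + 3).+2)%N) ?dfRS //; lia.
rewrite !(exprS (2 : C)) !(exprS (z ^+ 2)).
have h1 := dfR_neq0 C (2 * k + 3).
have h2 := fact_neq0 C (2 * k.+1).+2. have h3 := fact_neq0 C (2 * k.+1).+3.
field. nzt.
Qed.

Lemma EC0 (C : numClosedFieldType) (z : C) k :
  (z - 0) ^+ 3 * q_even k 0 z
    = 0 * (z - 0) ^+ 2 * (e_ (k + 1) ((0 : C) ^+ 2) / f_ k ((0 : C) ^+ 2)) * z ^+ (2 * k + 2)
      + dfR C (2 * k + 3) / (2 ^+ (k + 3) * f_ k ((0 : C) ^+ 2)) * Lm (k + 2) z 0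
      - (0 : C) ^+ 2 * (dfR C (2 * k + 1) / (2 ^+ (k + 2) * f_ k ((0 : C) ^+ 2))) * Lm (k + 1) z 0.
Proof.
have -> : q_even k 0 z = dfR C (2 * k + 3) / (2 ^+ k * k.+1%:R) *
   \sum_(j < k.+1) 2 ^+ j * j.+1%:R / dfR C (2 * j + 3) * (z ^+ 2) ^+ j.
  rewrite /q_even [X in _ + X]big1 ?addr0; last by move=> j _; rewrite alpha_odd0 mul0r.
  rewrite mulr_sumr; apply: eq_bigr => j _.
  have hj : (j <= k)%N by have := ltn_ord j; lia.
  rewrite alpha_even0 // -pow2k.
  have h1 := dfR_neq0 C (2 * j + 3). have h3 : (2 ^+ k : C) != 0 by apply: expf_neq0; nzt.
  field. nzt.
rewrite subr0 mulrCA ZC f_at0' addn2 expr0n /= !mul0r add0r subr0.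
have -> : (2 : C) ^+ (k + 3) = 2 ^+ k * 8 by rewrite exprD; ring.
have h3 : (2 ^+ k : C) != 0 by apply: expf_neq0; nzt.
rewrite (addn2 k). field. nzt.
Qed.

Theorem lemma4p2 (C : numClosedFieldType) (a z : C) (k : nat) :
  a \is Num.real ->
  (z - a) ^+ 3 * q_odd k a z
    = (z - a) ^+ 2 * z ^+ (2 * k + 2)
      + a * (dfR C (2 * k + 1) / (2 ^+ (k + 2) * f_ k (a ^+ 2))) * Lm (k + 1) z a
  /\
  (z - a) ^+ 3 * q_even k a z
    = a * (z - a) ^+ 2 * (e_ (k + 1) (a ^+ 2) / f_ k (a ^+ 2)) * z ^+ (2 * k + 2)
      + dfR C (2 * k + 3) / (2 ^+ (k + 3) * f_ k (a ^+ 2)) * Lm (k + 2) z a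
      - a ^+ 2 * (dfR C (2 * k + 1) / (2 ^+ (k + 2) * f_ k (a ^+ 2))) * Lm (k + 1) z a.
Proof.
move=> ha. have hx : 0 <= a ^+ 2 by rewrite -realEsqr.
have hF : forall n, f_ n (a ^+ 2) != 0 by move=> n; rewrite lt0r_neq0 // f_gt0.
split; first exact: OC.
have [->|ha0] := eqVneq a 0; first exact: EC0.
exact: EC_nz.
Qed.
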